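(* In the setting described in the context, fix $R\in\Gamma$. Then for every $t\in[0,p|R|r^2]$, \[\mathbb{P}\Big\{\big|\|X_{R'}\|_{2\to2}^2-p\|X_R\|_{2\to2}^2\big|\ge t\Big\}\le (3d+3)\exp\Big(-\frac{t^2}{48p|R|r^4}\Big).\]
   Context: Let $X=\{x_i\}_{i\in[n]}$ be points in $\mathbb{R}^d$ and $\Gamma$ a partition of $[n]$ into $k$ nonempty sets. For nonempty $S\subseteq[n]$, $c_S:=\frac1{|S|}\sum_{i\in S}x_i$, and $X_S$ denotes the $d\times n$ matrix whose $i$-th column is $x_i-c_S$ if $i\in S$ and $0$ otherwise. Let $r:=\max_{S\in\Gamma}\max_{i\in S}\|x_i-c_S\|$. Let $p\in(0,1]$ and let $W\subseteq[n]$ be random, containing each index independently with probability $p$; for $S\in\Gamma$ put $S':=S\cap W$ (so $X_{R'}$ has columns $x_i-c_{R'}$ for $i\in R'$ and zero otherwise; it is undefined when $R'=\emptyset$). *)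

(* Defs.v *)
From HB Require Import structures.
From mathcomp Require Import all_boot all_order all_algebra.
From mathcomp Require Import classical_sets boolp reals.
From mathcomp Require Import ereal topology normedtype sequences exp.
Set Implicit Arguments. Unset Strict Implicit. Unset Printing Implicit Defensive.
Import Order.TTheory GRing.Theory Num.Theory.
Local Open Scope ring_scope.
Local Open Scope classical_set_scope.

Section Defs.
Variable R : realType.

Definition eucl_norm (m : nat) (v : 'cV[R]_m) : R := Num.sqrt (\sum_(a < m) v a 0 ^+ 2).

Definition op_norm22 (m k : nat) (A : 'M[R]_(m, k)) : R :=
  sup [set eucl_norm (A *m v) | v in [set v : 'cV[R]_k | eucl_norm v <= 1]].

Variables (d n : nat) (x : 'I_n -> 'cV[R]_d).

Definition centroid (S : {set 'I_n}) : 'cV[R]_d :=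
  (#|S|%:R)^-1 *: \sum_(i in S) x i.

Definition Xmat (S : {set 'I_n}) : 'M[R]_(d, n) :=
  \matrix_(a < d, i < n) (if i \in S then (x i - centroid S) a 0 else 0).

Definition cluster_radius (Gamma : {set {set 'I_n}}) : R :=
  \big[Num.max/0]_(S in Gamma) \big[Num.max/0]_(i in S) eucl_norm (x i - centroid S).
End Defs.

(* Probability that the random subset W of 'I_n (each index included
   independently with probability p) satisfies the event E *)
Definition bernoulli_prob (R : realType) (n : nat) (p : R) (E : pred {set 'I_n}) : R :=
  \sum_(W : {set 'I_n} | E W) p ^+ #|W| * (1 - p) ^+ (n - #|W|).

(* Main.v *)
Require Import Defs.
From HB Require Import structures.
From mathcomp Require Import all_boot all_order all_algebra.
From mathcomp Require Import reals.
From mathcomp Require Import ereal topology normedtype sequences exp.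
From mathcomp Require Import ring lra.
From mathcomp Require classical_sets.
Import Order.TTheory GRing.Theory Num.Theory.
Local Open Scope ring_scope.
Set Implicit Arguments. Unset Strict Implicit.

Section Scalar.
Variable R : realType.
Definition ch (x : R) := (expR x + expR (- x)) / 2.
Definition sh (x : R) := (expR x - expR (- x)) / 2.

Lemma expRNmul (z : R) : expR z * expR (- z) = 1.
Proof. by rewrite -expRD subrr expR0. Qed.

Lemma expR_le_inv (z : R) : z < 1 -> expR z * (1 - z) <= 1.
Proof.
move=> hz; rewrite -[leRHS](expRNmul z) ler_pM2l ?expR_gt0 //.
by have := expR_ge1Dx (- z); rewrite addrC.
Qed.

Lemma exp_quad (z : R) : `|z| <= 1/2 -> expR z <= 1 + z + 2 * z ^+ 2.
Proof.
rewrite ler_norml => /andP[hz2 hz1].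
have h : expR z * (1 - z) <= 1 by apply: expR_le_inv; lra.
have he := expR_gt0 z.
nra.
Qed.

Lemma sh_le (a : R) : 0 <= a -> sh a <= a * expR a.
Proof.
move=> ha.
have h1 := expR_ge1Dx (- (a + a)).
have e : expR (- a) = expR a * expR (- (a + a)).
  by rewrite -expRD; congr expR; ring.
have he := expR_gt0 a.
rewrite /sh e.
nra.
Qed.

Lemma ch_ge0 (a : R) : 0 <= ch a.
Proof. by rewrite /ch divr_ge0 // addr_ge0 // ltW // expR_gt0. Qed.

Lemma expR_le_ch (a : R) : expR a <= 2 * ch a.
Proof. have := expR_gt0 (- a); rewrite /ch; lra. Qed.

Lemma ch_mono (x y : R) : 0 <= x -> x <= y -> ch x <= ch y.
Proof.
move=> hx hxy.
have h1 : expR x <= expR y by rewrite ler_expR.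
have hA : 1 <= expR x by rewrite -expR0 ler_expR.
have u1 := expRNmul x. have v1 := expRNmul y.
have hu : 0 < expR (- x) := expR_gt0 _.
have hv : 0 < expR (- y) := expR_gt0 _.
have hu1 : expR (- x) <= 1 by rewrite -expR0 ler_expR; lra.
have hv1 : expR (- y) <= 1 by rewrite -expR0 ler_expR; lra.
have e : expR (- x) - expR (- y) = expR (- x) * expR (- y) * (expR y - expR x).
  transitivity (expR (-x) * (expR y * expR (- y)) - expR (-y) * (expR x * expR (- x))); last by ring.
  by rewrite u1 v1 !mulr1.
have : expR (- x) * expR (- y) * (expR y - expR x) <= expR y - expR x.
  rewrite ler_piMl //; [lra | nra].
rewrite /ch; lra.
Qed.

Lemma scalar_main (a s w : R) : 0 <= a -> 0 <= s -> s <= 1/2 -> `|w| <= s ->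
  ch (Num.sqrt (a ^+ 2 + 2 * a * w + s ^+ 2)) <= ch a + w * sh a + 2 * s ^+ 2 * ch a.
Proof.
move=> ha hs hs2 hw.
move: hw; rewrite ler_norml => /andP[hw2 hw1].
set q := _ + _ + _.
have hq : 0 <= q.
  have h1 : 0 <= (s - w) * (s + w) by apply: mulr_ge0; lra.
  have h2 : 0 <= (a + w) ^+ 2 := sqr_ge0 _.
  rewrite /q; nra.
set c := Num.sqrt q.
have hc : 0 <= c := sqrtr_ge0 q.
have hc2 : c ^+ 2 = q := sqr_sqrtr hq.
set dd := c - a.
have hd1 : dd <= s.
  rewrite /dd; have : q <= (a + s) ^+ 2 by rewrite /q; nra.
  rewrite -hc2 => h; have hh : 0 <= a + s by lra.
  have : c <= a + s by rewrite -(ler_pXn2r (_ : 0 < 2)%N) ?nnegrE.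
  lra.
have hd2 : - s <= dd.
  rewrite /dd; case: (lerP (a - s) 0) => h; first lra.
  have : (a - s) ^+ 2 <= q by rewrite /q; nra.
  rewrite -hc2 => h'.
  have : a - s <= c by rewrite -(ler_pXn2r (_ : 0 < 2)%N) ?nnegrE //; lra.
  lra.
have hdn : `|dd| <= 1/2 by rewrite ler_norml; lra.
have hdn' : `|- dd| <= 1/2 by rewrite normrN.
have e1 := exp_quad hdn.
have e2 := exp_quad hdn'.
have ec : ch c = (expR a * expR dd + expR (- a) * expR (- dd)) / 2.
  by rewrite /ch -!expRD /dd; congr ((expR _ + expR _) / 2); ring.
have ea := expR_gt0 a.
have ena := expR_gt0 (- a).
have step1 : ch c <= ch a * (1 + 2 * dd ^+ 2) + sh a * dd.
  rewrite ec /ch /sh; nra.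
have iden : 2 * a * (dd - w) = s ^+ 2 - dd ^+ 2.
  by move: hc2; rewrite /q /dd => hc2; nra.
have hsd : 0 <= s ^+ 2 - dd ^+ 2 by nra.
have step2 : sh a * (dd - w) <= ch a * (s ^+ 2 - dd ^+ 2).
  case: (ler0P a) => ha0.
    have -> : a = 0 by lra.
    by rewrite /sh oppr0 subrr mul0r mul0r mulr_ge0 // ch_ge0.
  have hsh := sh_le ha.
  have hech := expR_le_ch a.
  have h3 : (2 * a) * (sh a * (dd - w)) <= (2 * a) * (ch a * (s ^+ 2 - dd ^+ 2)).
    have -> : (2 * a) * (sh a * (dd - w)) = sh a * (2 * a * (dd - w)) by ring.
    rewrite iden.
    have : sh a * (s ^+ 2 - dd ^+ 2) <= a * expR a * (s ^+ 2 - dd ^+ 2) by rewrite ler_wpM2r.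
    have : 0 <= (a * (s ^+ 2 - dd ^+ 2)) * (2 * ch a - expR a).
      apply: mulr_ge0; [apply: mulr_ge0 => //; lra | lra].
    lra.
  by move: h3; rewrite ler_pM2l //; lra.
have hch := ch_ge0 a.
nra.
Qed.
End Scalar.

Lemma mul_self_ge0 {R : realDomainType} (x : R) : 0 <= x * x.
Proof. by rewrite -expr2 sqr_ge0. Qed.

Section Vec.
Variable R : realType.
Variables a b : nat.
Implicit Types A B C v Z : 'M[R]_(a, b).
Implicit Types lam th : R.

Definition ipm A B : R := \sum_i \sum_j A i j * B i j.
Definition n2 A := ipm A A.
Definition nrm A := Num.sqrt (n2 A).

Lemma ipmC A B : ipm A B = ipm B A.
Proof. by apply: eq_bigr => i _; apply: eq_bigr => j _; rewrite mulrC. Qed.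

Lemma ipmDl A B C : ipm (A + B) C = ipm A C + ipm B C.
Proof.
rewrite /ipm -big_split; apply: eq_bigr => i _.
by rewrite -big_split; apply: eq_bigr => j _; rewrite !mxE mulrDl.
Qed.

Lemma ipmZl k A B : ipm (k *: A) B = k * ipm A B.
Proof.
rewrite /ipm mulr_sumr; apply: eq_bigr => i _.
by rewrite mulr_sumr; apply: eq_bigr => j _; rewrite !mxE mulrA.
Qed.

Lemma ipmDr A B C : ipm C (A + B) = ipm C A + ipm C B.
Proof. by rewrite ipmC ipmDl ![ipm _ C]ipmC. Qed.

Lemma ipmZr k A B : ipm A (k *: B) = k * ipm A B.
Proof. by rewrite ipmC ipmZl ipmC. Qed.

Lemma n2_ge0 A : 0 <= n2 A.
Proof. by apply: sumr_ge0 => i _; apply: sumr_ge0 => j _; apply: mul_self_ge0. Qed.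

Lemma n2_expand A B k : n2 (A + k *: B) = n2 A + 2 * k * ipm A B + k ^+ 2 * n2 B.
Proof.
rewrite /n2 ipmDl !ipmDr !ipmZl !ipmZr [ipm B A]ipmC; ring.
Qed.

Lemma n2_eq0 A : n2 A = 0 -> forall i j, A i j = 0.
Proof.
move=> h i j.
have h1 := @psumr_eq0P _ _ predT _ (fun i _ => sumr_ge0 _ (fun j _ => mul_self_ge0 (A i j))) h i isT.
have h2 := @psumr_eq0P _ _ predT _ (fun j _ => mul_self_ge0 (A i j)) h1 j isT.
by move/eqP: h2; rewrite mulf_eq0 orbb => /eqP.
Qed.

Lemma cs A B : ipm A B ^+ 2 <= n2 A * n2 B.
Proof.
have hB := n2_ge0 B.
case: (ler0P (n2 B)) => hb.
  have hb0 : n2 B = 0 by apply/eqP; rewrite eq_le hb hB.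
  have -> : ipm A B = 0.
    by rewrite /ipm big1 // => i _; rewrite big1 // => j _; rewrite (n2_eq0 hb0) mulr0.
  by rewrite hb0 mulr0 expr0n.
have := n2_ge0 (n2 B *: A + (- ipm A B) *: B).
rewrite n2_expand /n2 !ipmZl !ipmZr -/(n2 A) -/(n2 B) => h.
have h2 : 0 <= n2 B * (n2 A * n2 B - ipm A B ^+ 2) by move: h; rewrite /n2; nra.
rewrite pmulr_rge0 // in h2; lra.
Qed.

Lemma nrm_ge0 A : 0 <= nrm A. Proof. exact: sqrtr_ge0. Qed.
Lemma nrm_sq A : nrm A ^+ 2 = n2 A. Proof. exact/sqr_sqrtr/n2_ge0. Qed.

Lemma cs_abs A B : `|ipm A B| <= nrm A * nrm B.
Proof.
rewrite -(ler_pXn2r (_ : 0 < 2)%N) ?nnegrE ?mulr_ge0 ?nrm_ge0 //.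
by rewrite real_normK ?num_real // exprMn !nrm_sq cs.
Qed.

Lemma lam_nrm lam A : 0 <= lam -> lam * nrm A = Num.sqrt (lam ^+ 2 * n2 A).
Proof. by move=> hl; rewrite sqrtrM ?sqr_ge0 // sqrtr_sqr ger0_norm. Qed.

Definition kk lam v Z := if 0 < nrm v then lam * ipm v Z / nrm v else 0.

Lemma kk_bound lam v Z : 0 <= lam -> `|kk lam v Z| <= lam * nrm Z.
Proof.
move=> hl; rewrite /kk; case: ifP => hv.
  rewrite normrM normfV (ger0_norm (nrm_ge0 v)) normrM (ger0_norm hl).
  rewrite ler_pdivrMr // -mulrA ler_wpM2l //.
  by rewrite mulrC cs_abs.
by rewrite normr0 mulr_ge0 ?nrm_ge0.
Qed.

Lemma kk_eq lam v Z : 0 <= lam ->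
  2 * (lam * nrm v) * kk lam v Z = 2 * lam ^+ 2 * ipm v Z.
Proof.
move=> hl; rewrite /kk; case: ifP => hv.
  by field; rewrite gt_eqF.
have hv0 : nrm v = 0.
  by apply/eqP; rewrite eq_le nrm_ge0 andbT leNgt hv.
have : `|ipm v Z| <= 0 by rewrite -(mul0r (nrm Z)) -hv0 cs_abs.
rewrite normr_le0 => /eqP ->.
by rewrite !mulr0.
Qed.

Lemma point_theta v Z lam th : 0 <= lam -> lam * `|th| * nrm Z <= 1/2 ->
  ch (lam * nrm (v + th *: Z)) <= ch (lam * nrm v) + (th * kk lam v Z) * sh (lam * nrm v)
     + 2 * (lam * `|th| * nrm Z) ^+ 2 * ch (lam * nrm v).
Proof.
move=> hl hs.
have hA : 0 <= lam * nrm v by rewrite mulr_ge0 ?nrm_ge0.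
have hs0 : 0 <= lam * `|th| * nrm Z by rewrite !mulr_ge0 ?nrm_ge0.
have hw : `|th * kk lam v Z| <= lam * `|th| * nrm Z.
  rewrite normrM.
  have e : lam * `|th| * nrm Z = `|th| * (lam * nrm Z) by ring.
  by rewrite e ler_wpM2l // kk_bound.
have := scalar_main hA hs0 hs hw.
suff -> : lam * nrm (v + th *: Z) = Num.sqrt ((lam * nrm v) ^+ 2 + 2 * (lam * nrm v) * (th * kk lam v Z) + (lam * `|th| * nrm Z) ^+ 2) by [].
rewrite lam_nrm // n2_expand.
congr Num.sqrt.
have e1 : 2 * (lam * nrm v) * (th * kk lam v Z) = th * (2 * (lam * nrm v) * kk lam v Z) by ring.
rewrite e1 kk_eq // !exprMn !nrm_sq real_normK ?num_real //.
ring.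
Qed.

Lemma two_point v Z (p lam : R) : 0 <= p -> p <= 1 -> 0 <= lam -> lam * nrm Z <= 1/2 ->
  p * ch (lam * nrm (v + (1 - p) *: Z)) + (1 - p) * ch (lam * nrm (v + (- p) *: Z))
  <= ch (lam * nrm v) * (1 + 2 * lam ^+ 2 * p * n2 Z).
Proof.
move=> hp0 hp1 hl hZ.
have hZ0 : 0 <= nrm Z := nrm_ge0 Z.
have hh : 0 <= lam * nrm Z by rewrite mulr_ge0.
have h1 : lam * `|1 - p| * nrm Z <= 1/2.
  rewrite ger0_norm ?subr_ge0 //.
  have e : lam * (1 - p) * nrm Z = lam * nrm Z - p * (lam * nrm Z) by ring.
  have := mulr_ge0 hp0 hh; lra.
have h2 : lam * `|- p| * nrm Z <= 1/2.
  rewrite normrN ger0_norm //.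
  have e : lam * p * nrm Z = lam * nrm Z - (1 - p) * (lam * nrm Z) by ring.
  have : 0 <= 1 - p by lra.
  move=> h1p; have := mulr_ge0 h1p hh; lra.
have P1 := point_theta v hl h1.
have P2 := point_theta v hl h2.
have hp1' : 0 <= 1 - p by lra.
have n1 : `|1 - p| = 1 - p by rewrite ger0_norm.
have n2' : `|- p| = p by rewrite normrN ger0_norm.
rewrite n1 in P1. rewrite n2' in P2.

have Q1 := ler_wpM2l hp0 P1.
have Q2 := ler_wpM2l hp1' P2.
apply: le_trans (lerD Q1 Q2) _.
set C := ch (lam * nrm v).
have hC : 0 <= C := ch_ge0 _.
have e : p * (C + (1 - p) * kk lam v Z * sh (lam * nrm v) + 2 * (lam * (1 - p) * nrm Z) ^+ 2 * C) +
   (1 - p) * (C + - p * kk lam v Z * sh (lam * nrm v) + 2 * (lam * p * nrm Z) ^+ 2 * C)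
   = C + (2 * lam ^+ 2 * nrm Z ^+ 2 * C * p) * (1 - p) by ring.
rewrite e nrm_sq.
have hq : 0 <= 2 * lam ^+ 2 * n2 Z * C * p by rewrite !mulr_ge0 ?sqr_ge0 ?n2_ge0.
have : (2 * lam ^+ 2 * n2 Z * C * p) * (1 - p) <= 2 * lam ^+ 2 * n2 Z * C * p.
  have -> : (2 * lam ^+ 2 * n2 Z * C * p) * (1 - p) = 2 * lam ^+ 2 * n2 Z * C * p - (2 * lam ^+ 2 * n2 Z * C * p) * p by ring.
  have := mulr_ge0 hq hp0; lra.
have e2 : C * (1 + 2 * lam ^+ 2 * p * n2 Z) = C + 2 * lam ^+ 2 * n2 Z * C * p by ring.
rewrite e2; lra.
Qed.

End Vec.
Unset Implicit Arguments.

Section Prob.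
Variable R : realType.
Variable n : nat.
Variable p : R.
Hypothesis hp0 : 0 <= p.
Hypothesis hp1 : p <= 1.
Implicit Types W J : {set 'I_n}.

Definition wt W : R := p ^+ #|W| * (1 - p) ^+ (n - #|W|).
Definition Ex (f : {set 'I_n} -> R) := \sum_W wt W * f W.

Lemma wt_ge0 W : 0 <= wt W.
Proof. by rewrite /wt mulr_ge0 // exprn_ge0 // subr_ge0. Qed.

Lemma Ex_le f g : (forall W, f W <= g W) -> Ex f <= Ex g.
Proof. by move=> h; apply: ler_sum => W _; rewrite ler_wpM2l ?wt_ge0. Qed.

Lemma ExMr f c : Ex (fun W => f W * c) = Ex f * c.
Proof. by rewrite /Ex mulr_suml; apply: eq_bigr => W _; rewrite mulrA. Qed.

Lemma ExMl f c : Ex (fun W => c * f W) = c * Ex f.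
Proof. by rewrite mulrC -ExMr /Ex; apply: eq_bigr => W _; rewrite (mulrC c). Qed.

Lemma bp_Ex (E : pred {set 'I_n}) : bernoulli_prob p E = Ex (fun W => (E W)%:R).
Proof.
rewrite /bernoulli_prob /Ex big_mkcond /=; apply: eq_bigr => W _.
by case: (E W); rewrite ?mulr1 ?mulr0.
Qed.

Lemma pair_sum (F : {set 'I_n} -> R) (i : 'I_n) :
  \sum_(W : {set 'I_n}) F W = \sum_(W : {set 'I_n} | i \notin W) (F W + F (i |: W)).
Proof.
rewrite (bigID (fun W : {set 'I_n} => i \in W)) /= addrC big_split /=; congr (_ + _).
rewrite (reindex_onto (fun W : {set 'I_n} => i |: W) (fun W : {set 'I_n} => W :\ i)) /=; last first.
  by move=> W hW; rewrite finset.setD1K.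
apply: eq_bigl => W; rewrite finset.setU11 /=.
case: (boolP (i \in W)) => hi /=.
  apply/negbTE/eqP => e; move: hi; rewrite -e.
  by rewrite in_setD1 eqxx.
by rewrite finset.setU1K ?eqxx.
Qed.

Lemma wt_split W (i : 'I_n) : i \notin W ->
  exists c, [/\ 0 <= c, wt W = (1 - p) * c & wt (i |: W) = p * c].
Proof.
move=> hi.
have hc : #|i |: W| = #|W|.+1 by rewrite cardsU1 hi.
have hn : (#|W|.+1 <= n)%N by rewrite -hc -[X in (_ <= X)%N]card_ord max_card.
exists (p ^+ #|W| * (1 - p) ^+ (n - #|W|.+1)); split.
- by rewrite mulr_ge0 // exprn_ge0 // subr_ge0.
- rewrite /wt (_ : (n - #|W|)%N = (n - #|W|.+1).+1); last by rewrite subnSK.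
  by rewrite exprS; ring.
- by rewrite /wt hc exprS subnS; ring.
Qed.

Lemma tower (f : {set 'I_n} -> R) (i : 'I_n) :
  Ex f = Ex (fun W => p * f (i |: W) + (1 - p) * f (W :\ i)).
Proof.
rewrite /Ex (pair_sum _ i) [RHS](pair_sum _ i).
apply: eq_bigr => W hi.
have [c [hc e1 e2]] := wt_split W i hi.
rewrite e1 e2 (finset.setU1K hi).
have -> : W :\ i = W by apply/finset.setP => j; rewrite in_setD1; case: eqP => // ->; rewrite (negbTE hi).
rewrite (_ : i |: (i |: W) = i |: W); last by rewrite finset.setUA finset.setUid.
ring.
Qed.

Lemma Ex1 : Ex (fun _ => 1) = 1.
Proof.
rewrite /Ex.
rewrite (partition_big (fun W => inord #|W| : 'I_n.+1) predT) //=.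
rewrite [RHS](_ : 1 = ((1 - p) + p) ^+ n); last by rewrite subrK expr1n.
rewrite exprDn; apply: eq_bigr => k _.
rewrite (eq_bigl (fun W => #|W| == k)); last first.
  move=> W; rewrite /=; apply/eqP/eqP => [h|h]; last by rewrite h inord_val.
  by rewrite -h inordK // ltnS -[X in (_ <= X)%N]card_ord max_card.
rewrite (eq_bigr (fun _ => p ^+ k * (1 - p) ^+ (n - k))); last first.
  by move=> W /eqP h; rewrite /wt ?mulr1 h.
rewrite sumr_const.
have -> : #|[pred W : {set 'I_n} | #|W| == k]| = 'C(n, k).
  by rewrite -[X in 'C(X, _)]card_ord -card_draws; apply: eq_card => W; rewrite !inE.
by rewrite mulrC.
Qed.

Definition Ssum a b (J : {set 'I_n}) (Z : 'I_n -> 'M[R]_(a, b)) (W : {set 'I_n}) :=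
  \sum_(i in J) (((i \in W)%:R - p) *: Z i).
Arguments Ssum {a b}.

Lemma Ssum_D1 a b (J : {set 'I_n}) (Z : 'I_n -> 'M[R]_(a, b)) i W : i \in J ->
  Ssum J Z W = ((i \in W)%:R - p) *: Z i + Ssum (J :\ i) Z W.
Proof.
move=> hi; rewrite /Ssum (bigD1 i) //=; congr (_ + _).
by apply: eq_bigl => j; rewrite in_setD1 andbC.
Qed.

Lemma Ssum_U1 a b (J : {set 'I_n}) (Z : 'I_n -> 'M[R]_(a, b)) i W : i \notin J ->
  Ssum J Z (i |: W) = Ssum J Z W.
Proof.
move=> hi; apply: eq_bigr => j hj; rewrite in_setU1.
by have -> : (j == i) = false by apply/eqP => e; move: hi; rewrite -e hj.
Qed.

Lemma Ssum_D1' a b (J : {set 'I_n}) (Z : 'I_n -> 'M[R]_(a, b)) i W : i \notin J ->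
  Ssum J Z (W :\ i) = Ssum J Z W.
Proof.
move=> hi; apply: eq_bigr => j hj; rewrite in_setD1.
by have -> : (j != i) = true by apply/eqP => e; move: hi; rewrite -e hj.
Qed.

Lemma pin_ind a b (Z : 'I_n -> 'M[R]_(a, b)) lam : 0 <= lam ->
  forall k (J : {set 'I_n}), #|J| = k -> (forall i, i \in J -> lam * nrm (Z i) <= 1/2) ->
  forall v : 'M[R]_(a, b), Ex (fun W => ch (lam * nrm (v + Ssum J Z W)))
     <= ch (lam * nrm v) * \prod_(i in J) (1 + 2 * lam ^+ 2 * p * n2 (Z i)).
Proof.
move=> hl; elim=> [|k IH] J hJ hZ v.
  have J0 : J = finset.set0 by apply: cards0_eq.
  subst J.
  apply: le_trans (Ex_le _ (fun W => 1 * ch (lam * nrm v)) _) _.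
    by move=> W; rewrite /Ssum big_set0 addr0 mul1r.
  by rewrite (ExMr (fun _ => 1)) Ex1 mul1r big_set0 mulr1.
have [i hi] : exists i, i \in J by apply/card_gt0P; rewrite hJ.
have hJ' : #|J :\ i| = k by move: hJ; rewrite (cardsD1 i J) hi add1n => -[].
have hZ' : forall j, j \in J :\ i -> lam * nrm (Z j) <= 1/2.
  by move=> j; rewrite in_setD1 => /andP[_ hj]; apply: hZ.
have hiJ' : i \notin J :\ i by rewrite in_setD1 eqxx.
set c := 1 + 2 * lam ^+ 2 * p * n2 (Z i).
rewrite (tower _ i).
apply: le_trans (Ex_le _ (fun W => ch (lam * nrm (v + Ssum (J :\ i) Z W)) * c) _) _.
  move=> W.
  rewrite !(@Ssum_D1 _ _ _ _ _ _ hi) (@Ssum_U1 _ _ _ _ _ _ hiJ') (@Ssum_D1' _ _ _ _ _ _ hiJ').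
  rewrite finset.setU11 in_setD1 eqxx /= sub0r.
  rewrite !addrA ![v + _ *: Z i]addrC -!addrA.
  rewrite ![_ *: Z i + (v + _)]addrC. 
  rewrite /c; apply: (two_point _ hp0 hp1 hl (hZ i hi)).
rewrite ExMr.
apply: le_trans (ler_wpM2r _ (IH _ hJ' hZ' v)) _.
  by rewrite /c addr_ge0 // !mulr_ge0 ?sqr_ge0 ?n2_ge0.
rewrite [X in _ <= _ * X](bigD1 i) //= -/c.
rewrite [X in _ <= _ * (c * X)](eq_bigl (fun j => j \in J :\ i)); last by move=> j; rewrite in_setD1 andbC.
by rewrite le_eqVlt; apply/orP; left; apply/eqP; ring.
Qed.
Lemma nrm0 a b : nrm (0 : 'M[R]_(a, b)) = 0.
Proof.
rewrite /nrm /n2 /ipm big1 ?sqrtr0 // => i _.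
by rewrite big1 // => j _; rewrite mxE mul0r.
Qed.

Lemma ch_gt0 (x : R) : 0 < ch x.
Proof. by rewrite /ch divr_gt0 // addr_gt0 // expR_gt0. Qed.

Lemma ch0 : ch (0 : R) = 1.
Proof. by rewrite /ch oppr0 expR0; field. Qed.

Lemma inv_ch_le (x : R) : (ch x)^-1 <= 2 * expR (- x).
Proof.
have h1 : expR x <= 2 * ch x by apply: expR_le_ch.
rewrite expRN.
have hx := expR_gt0 x. have hc := ch_gt0 x.
have e : 2 * (expR x)^-1 - (ch x)^-1 = (2 * ch x - expR x) / (expR x * ch x).
  by field; rewrite ?lt0r_neq0 ?hx ?hc //; apply/andP; split; apply: lt0r_neq0.
rewrite -subr_ge0 e divr_ge0 ?subr_ge0 // mulr_ge0 // ltW //.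
Qed.

Lemma pin_tail a b (Z : 'I_n -> 'M[R]_(a, b)) (J : {set 'I_n}) lam al :
  0 <= lam -> 0 <= al -> (forall i, i \in J -> lam * nrm (Z i) <= 1/2) ->
  bernoulli_prob p (fun W => al <= nrm (Ssum J Z W))
  <= 2 * expR (- (lam * al) + 2 * lam ^+ 2 * p * \sum_(i in J) n2 (Z i)).
Proof.
move=> hl hal hZ; rewrite bp_Ex.
set C := ch (lam * al).
have hC : 0 < C := ch_gt0 _.
apply: le_trans (Ex_le _ (fun W => ch (lam * nrm (0 + Ssum J Z W)) * C^-1) _) _.
  move=> W; rewrite add0r; case: (boolP (al <= nrm (Ssum J Z W))) => h /=.
    rewrite ler_pdivlMr // mul1r; apply: ch_mono; first by rewrite mulr_ge0.
    by rewrite ler_wpM2l.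
  by rewrite mulr_ge0 ?ch_ge0 // invr_ge0 ltW.
rewrite ExMr.
apply: le_trans (ler_wpM2r _ (@pin_ind a b Z lam hl #|J| J erefl hZ 0)) _.
  by rewrite invr_ge0 ltW.
rewrite nrm0 mulr0 ch0 mul1r.
have hP : \prod_(i in J) (1 + 2 * lam ^+ 2 * p * n2 (Z i)) <= expR (2 * lam ^+ 2 * p * \sum_(i in J) n2 (Z i)).
  rewrite mulr_sumr expR_sum; apply: ler_prod => i _.
  by rewrite expR_ge1Dx addr_ge0 // !mulr_ge0 ?sqr_ge0 ?n2_ge0.
have hP0 : 0 <= \prod_(i in J) (1 + 2 * lam ^+ 2 * p * n2 (Z i)).
  by apply: prodr_ge0 => i _; rewrite addr_ge0 // !mulr_ge0 ?sqr_ge0 ?n2_ge0.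
have hI := inv_ch_le (lam * al).
rewrite -/C in hI.
apply: le_trans (ler_pM hP0 _ hP hI) _; first by rewrite invr_ge0 ltW.
rewrite expRD le_eqVlt; apply/orP; left; apply/eqP; ring.
Qed.

End Prob.
Set Implicit Arguments. Unset Strict Implicit.

Section Lin.
Variable R : realType.

Lemma eucl_nrm m (v : 'cV[R]_m) : eucl_norm v = nrm v.
Proof.
rewrite /eucl_norm /nrm /n2 /ipm; congr Num.sqrt.
by apply: eq_bigr => i _; rewrite big_ord1 expr2.
Qed.

Lemma ipm_cV m (v w : 'cV[R]_m) : ipm v w = \sum_i v i 0 * w i 0.
Proof. by apply: eq_bigr => i _; rewrite big_ord1. Qed.

Lemma adj a b (M : 'M[R]_(a, b)) (x : 'cV[R]_b) (y : 'cV[R]_a) :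
  ipm (M *m x) y = ipm x (M^T *m y).
Proof.
rewrite !ipm_cV.
under eq_bigr do rewrite mxE mulr_suml.
rewrite exchange_big /=; apply: eq_bigr => k _.
by rewrite mxE mulr_sumr; apply: eq_bigr => i _; rewrite mxE; ring.
Qed.

Lemma n2Z a b (k : R) (A : 'M[R]_(a, b)) : n2 (k *: A) = k ^+ 2 * n2 A.
Proof. by rewrite /n2 ipmZl ipmZr mulrA expr2. Qed.

Lemma nrmZ a b (k : R) (A : 'M[R]_(a, b)) : nrm (k *: A) = `|k| * nrm A.
Proof. by rewrite /nrm n2Z sqrtrM ?sqr_ge0 // sqrtr_sqr. Qed.

Lemma dual a b (M : 'M[R]_(a, b)) (x : 'cV[R]_b) : nrm x <= 1 ->
  exists y : 'cV[R]_a, nrm y <= 1 /\ nrm (M *m x) <= nrm (M^T *m y).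
Proof.
move=> hx.
have hM := nrm_ge0 (M *m x).
case: (ler0P (nrm (M *m x))) => h0.
  exists 0; rewrite nrm0 mulmx0 nrm0; split => //; lra.
exists ((nrm (M *m x))^-1 *: (M *m x)); split.
  by rewrite nrmZ ger0_norm ?invr_ge0 // mulVf ?lt0r_neq0.
rewrite linearZ /= nrmZ ger0_norm ?invr_ge0 //.
rewrite ler_pdivlMl //.
have e : nrm (M *m x) * nrm (M *m x) = ipm x (M^T *m (M *m x)).
  by rewrite -expr2 nrm_sq -adj.
rewrite e.
apply: le_trans (ler_norm _) _.
apply: le_trans (cs_abs _ _) _.
rewrite -[leRHS]mul1r ler_wpM2r ?nrm_ge0 //.
Qed.

Lemma nrm_mul_le a b (M : 'M[R]_(a, b)) (v : 'cV[R]_b) : nrm (M *m v) <= nrm M * nrm v.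
Proof.
rewrite /nrm -sqrtrM ?n2_ge0 // ler_sqrt ?mulr_ge0 ?n2_ge0 //.
rewrite /n2 /ipm [X in _ <= _ * X](_ : _ = \sum_k v k 0 * v k 0); last first.
  by apply: eq_bigr => i _; rewrite big_ord1.
rewrite mulr_suml; apply: ler_sum => i _.
rewrite big_ord1 mxE.
have := cs (\row_j M i j) (\row_j v j 0).
rewrite /ipm /n2 /ipm !big_ord1.
have e1 : \sum_j (\row_j M i j) ord0 j * (\row_j v j 0) ord0 j = \sum_j M i j * v j 0.
  by apply: eq_bigr => j _; rewrite !mxE.
have e2 : \sum_j (\row_j M i j) ord0 j * (\row_j M i j) ord0 j = \sum_j M i j * M i j.
  by apply: eq_bigr => j _; rewrite !mxE.
have e3 : \sum_j (\row_j v j 0) ord0 j * (\row_j v j 0) ord0 j = \sum_j v j 0 * v j 0.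
  by apply: eq_bigr => j _; rewrite !mxE.
by rewrite e1 e2 e3 expr2.
Qed.

Lemma opn_ub a b (M : 'M[R]_(a, b)) (v : 'cV[R]_b) : nrm v <= 1 ->
  nrm (M *m v) <= op_norm22 M.
Proof.
move=> hv; rewrite /op_norm22; set S := (X in sup X).
have hs : classical_sets.has_ubound S.
  exists (nrm M) => y [w hw <-]; rewrite eucl_nrm.
  apply: le_trans (nrm_mul_le _ _) _.
  rewrite -[leRHS]mulr1 ler_wpM2l ?nrm_ge0 //; by rewrite -eucl_nrm.
apply: (ub_le_sup hs).
by exists v; rewrite /= ?eucl_nrm.
Qed.

Lemma opn_le a b (M : 'M[R]_(a, b)) (B : R) :
  (forall v : 'cV[R]_b, nrm v <= 1 -> nrm (M *m v) <= B) -> op_norm22 M <= B.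
Proof.
move=> h; rewrite /op_norm22; apply: ge_sup.
  exists (eucl_norm (M *m 0)), 0 => //=.
  by rewrite eucl_nrm nrm0.
by move=> y [w hw <-]; rewrite eucl_nrm; apply: h; rewrite -eucl_nrm.
Qed.

Lemma opn_ge0 a b (M : 'M[R]_(a, b)) : 0 <= op_norm22 M.
Proof.
have h := @opn_ub a b M 0.
rewrite mulmx0 !nrm0 in h; apply: h; exact: ler01.
Qed.

End Lin.

Section Gen.
Variable R : realType.

Lemma ipmBl a b (A B C : 'M[R]_(a, b)) : ipm (A - B) C = ipm A C - ipm B C.
Proof. by rewrite -scaleN1r ipmDl ipmZl mulN1r. Qed.

Lemma ipm_suml a b (I : finType) (P : pred I) (F : I -> 'M[R]_(a, b)) B :
  ipm (\sum_(i | P i) F i) B = \sum_(i | P i) ipm (F i) B.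
Proof.
rewrite /ipm [RHS]exchange_big /=; apply: eq_bigr => k _.
rewrite [RHS]exchange_big /=; apply: eq_bigr => l _.
by rewrite summxE mulr_suml.
Qed.

Lemma ipm_outer d (y u : 'cV[R]_d) : ipm (y *m y^T) (u *m u^T) = ipm y u ^+ 2.
Proof.
rewrite !ipm_cV expr2 big_distrlr /=.
rewrite /ipm; apply: eq_bigr => i _; apply: eq_bigr => j _.
rewrite !mxE !big_ord1 !mxE; ring.
Qed.

Lemma n2_outer d (u : 'cV[R]_d) : nrm (u *m u^T) = n2 u.
Proof. by rewrite /nrm /n2 ipm_outer sqrtr_sqr ger0_norm // -/(n2 u) n2_ge0. Qed.

End Gen.

Section Main.
Variable R : realType.
Variables d n : nat.
Variable x : 'I_n -> 'cV[R]_d.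
Implicit Types S T W : {set 'I_n}.
Implicit Types u : 'cV[R]_d.

Definition Xt (S : {set 'I_n}) (u : 'cV[R]_d) := (Xmat x S)^T *m u.

Lemma n2_Xt S u : n2 (Xt S u) = \sum_(i in S) ipm (x i - centroid x S) u ^+ 2.
Proof.
rewrite /n2 ipm_cV [RHS]big_mkcond /=; apply: eq_bigr => i _.
rewrite /Xt mxE.
under eq_bigr do rewrite !mxE.
case: ifP => hi.
  by rewrite ipm_cV expr2; congr (_ * _); apply: eq_bigr => a _; rewrite !mxE.
by rewrite big1 ?mul0r // => a _; rewrite mul0r.
Qed.

Lemma sum_centroid S : \sum_(i in S) (x i - centroid x S) = 0.
Proof.
case: (posnP #|S|) => hS.
  by rewrite (cards0_eq hS) big_set0.
rewrite sumrB sumr_const -scaler_nat /centroid scalerA mulfV ?scale1r ?subrr //.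
by rewrite pnatr_eq0 -lt0n.
Qed.

Lemma sum_sub S T : \sum_(i in S) (x i - centroid x T) = #|S|%:R *: (centroid x S - centroid x T).
Proof.
have e : forall i, x i - centroid x T = (x i - centroid x S) + (centroid x S - centroid x T).
  by move=> i; rewrite addrA subrK.
under eq_bigr do rewrite e.
by rewrite big_split /= sum_centroid add0r sumr_const scaler_nat.
Qed.
Variable Rs : {set 'I_n}.
Variable p : R.

Definition Y i := x i - centroid x Rs.
Definition GG W := Ssum R n p d d Rs (fun i => Y i *m (Y i)^T) W.
Definition SS W := Ssum R n p d 1 Rs Y W.
Definition mm W := #|Rs :&: W|.
Definition del W := centroid x (Rs :&: W) - centroid x Rs.

Lemma SS_eq W : SS W = (mm W)%:R *: del W.
Proof.
rewrite /SS /Ssum.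
under eq_bigr do rewrite scalerBl.
rewrite sumrB -scaler_sumr sum_centroid scaler0 subr0.
rewrite /mm /del -sum_sub.
rewrite big_mkcond [RHS]big_mkcond; apply: eq_bigr => i _; rewrite finset.in_setI.
by case: (i \in Rs); case: (i \in W); rewrite /= ?scale1r ?scale0r.
Qed.

Lemma D_eq W u : n2 (Xt (Rs :&: W) u) - p * n2 (Xt Rs u)
  = ipm (GG W) (u *m u^T) - (mm W)%:R * ipm (del W) u ^+ 2.
Proof.
set e := ipm (del W) u.
have h1 : forall i, ipm (x i - centroid x (Rs :&: W)) u = ipm (Y i) u - e.
  move=> i; rewrite /e -ipmBl /Y /del; congr ipm.
  by rewrite opprB addrA subrK.
have hsum : \sum_(i in Rs :&: W) ipm (Y i) u = (mm W)%:R * e.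
  by rewrite -ipm_suml /Y sum_sub ipmZl.
have hG : ipm (GG W) (u *m u^T) = \sum_(i in Rs :&: W) ipm (Y i) u ^+ 2 - p * \sum_(i in Rs) ipm (Y i) u ^+ 2.
  rewrite /GG /Ssum ipm_suml.
  under eq_bigr do rewrite ipmZl ipm_outer mulrBl.
  rewrite sumrB -mulr_sumr; congr (_ - _).
  rewrite big_mkcond [RHS]big_mkcond; apply: eq_bigr => i _; rewrite finset.in_setI.
  by case: (i \in Rs); case: (i \in W); rewrite /= ?mul1r ?mul0r.
rewrite !n2_Xt.
under eq_bigr do rewrite h1.
rewrite (eq_bigr (fun i => ipm (Y i) u ^+ 2 - (2 * e) * ipm (Y i) u + e ^+ 2)); last by move=> i _; ring.
rewrite big_split sumrB /= -mulr_sumr sumr_const hsum hG /mm -mulr_natl.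
rewrite (eq_bigr (fun i => ipm (Y i) u ^+ 2)) //.
ring.
Qed.

Lemma bnd_G W u : nrm u <= 1 -> `|ipm (GG W) (u *m u^T)| <= nrm (GG W).
Proof.
move=> hu; apply: le_trans (cs_abs _ _) _.
rewrite n2_outer -[leRHS]mulr1 ler_wpM2l ?nrm_ge0 //.
rewrite -nrm_sq; have h0 := nrm_ge0 u.
by rewrite expr2; have := ler_pM h0 h0 hu hu; rewrite mul1r.
Qed.

Lemma bnd_S W u : nrm u <= 1 ->
  0 <= (mm W)%:R * ipm (del W) u ^+ 2 <= n2 (SS W) / (mm W)%:R.
Proof.
move=> hu; apply/andP; split; first by rewrite mulr_ge0 ?sqr_ge0.
case: (posnP (mm W)) => hm.
  by rewrite hm mul0r invr0 mulr0.
have hm' : 0 < (mm W)%:R :> R by rewrite ltr0n.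
rewrite SS_eq n2Z ler_pdivlMr //.
have hcs := cs (del W) u.
have hn : n2 u <= 1.
  rewrite -nrm_sq; have h0 := nrm_ge0 u.
  by rewrite expr2; have := ler_pM h0 h0 hu hu; rewrite mul1r.
have hd := n2_ge0 (del W).
have : ipm (del W) u ^+ 2 <= n2 (del W).
  apply: le_trans hcs _; rewrite -[leRHS]mulr1 ler_wpM2l //.
move=> h.
have e1 : (mm W)%:R * ipm (del W) u ^+ 2 * (mm W)%:R = ((mm W)%:R * (mm W)%:R) * ipm (del W) u ^+ 2 by ring.
have e2 : (mm W)%:R ^+ 2 * n2 (del W) = ((mm W)%:R * (mm W)%:R) * n2 (del W) by ring.
by rewrite e1 e2 ler_wpM2l // mulr_ge0 // ltW.
Qed.

Lemma le_sqrt_of_sq (a B : R) : 0 <= a -> a ^+ 2 <= B -> a <= Num.sqrt B.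
Proof.
move=> ha h; have hB : 0 <= B by apply: le_trans h; apply: sqr_ge0.
by rewrite -(ger0_norm ha) -sqrtr_sqr ler_sqrt.
Qed.

Lemma sq_le_of_le_sqrt (K B : R) : 0 <= K -> K <= Num.sqrt B -> 0 <= B -> K ^+ 2 <= B.
Proof.
move=> hK h hB; rewrite -(sqr_sqrtr hB) !expr2.
exact: ler_pM.
Qed.

Lemma key W : 0 < p ->
  `|op_norm22 (Xmat x (Rs :&: W)) ^+ 2 - p * op_norm22 (Xmat x Rs) ^+ 2|
    <= nrm (GG W) + n2 (SS W) / (mm W)%:R.
Proof.
move=> hp.
set K := op_norm22 (Xmat x (Rs :&: W)).
set L := op_norm22 (Xmat x Rs).
set G := nrm (GG W).
set E := n2 (SS W) / (mm W)%:R.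
have hK : 0 <= K := opn_ge0 _.
have hL : 0 <= L := opn_ge0 _.
have hG : 0 <= G := nrm_ge0 _.
have hE : 0 <= E by rewrite divr_ge0 ?n2_ge0.
have XtL : forall u : 'cV[R]_d, nrm u <= 1 -> nrm (Xt Rs u) <= L.
  move=> u hu; have [y [hy h]] := dual (Xmat x Rs)^T hu.
  by rewrite trmxK in h; apply: le_trans h (opn_ub _ hy).
have XtK : forall u : 'cV[R]_d, nrm u <= 1 -> nrm (Xt (Rs :&: W) u) <= K.
  move=> u hu; have [y [hy h]] := dual (Xmat x (Rs :&: W))^T hu.
  by rewrite trmxK in h; apply: le_trans h (opn_ub _ hy).
have sqle : forall a b : R, 0 <= a -> a <= b -> a ^+ 2 <= b ^+ 2.
  by move=> a0 b0 ha hab; rewrite !expr2 ler_pM.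
have hA : K ^+ 2 <= p * L ^+ 2 + G.
  apply: sq_le_of_le_sqrt => //; last by rewrite addr_ge0 // mulr_ge0 ?sqr_ge0 // ltW.
  apply: opn_le => v hv.
  have [u [hu h]] := dual (Xmat x (Rs :&: W)) hv.
  apply: le_trans h _; apply: le_sqrt_of_sq; first exact: nrm_ge0.
  rewrite nrm_sq.
  have hD := D_eq W u. have hb := bnd_G W hu. have hs := bnd_S W hu.
  have hl := sqle _ _ (nrm_ge0 _) (XtL u hu). rewrite nrm_sq in hl.
  move: hb; rewrite ler_norml => /andP[hb1 hb2].
  move: hs => /andP[hs1 hs2].
  have : p * n2 (Xt Rs u) <= p * L ^+ 2 by rewrite ler_wpM2l // ltW.
  rewrite /Xt in hD hl * => hh; rewrite /G; lra.
have hB : p * L ^+ 2 <= K ^+ 2 + G + E.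
  have hq : 0 <= (K ^+ 2 + G + E) / p by rewrite divr_ge0 ?addr_ge0 ?sqr_ge0 // ltW.
  have : L <= Num.sqrt ((K ^+ 2 + G + E) / p).
    apply: opn_le => v hv.
    have [u [hu h]] := dual (Xmat x Rs) hv.
    apply: le_trans h _; apply: le_sqrt_of_sq; first exact: nrm_ge0.
    rewrite nrm_sq ler_pdivlMr //.
    have hD := D_eq W u. have hb := bnd_G W hu. have hs := bnd_S W hu.
    have hk := sqle _ _ (nrm_ge0 _) (XtK u hu). rewrite nrm_sq in hk.
    move: hb; rewrite ler_norml => /andP[hb1 hb2].
    move: hs => /andP[hs1 hs2].
    rewrite /Xt in hD hk *; rewrite /G /E; lra.
  move=> h; have := sq_le_of_le_sqrt hL h hq.
  by rewrite ler_pdivlMr // mulrC.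
rewrite ler_norml; apply/andP; split; lra.
Qed.

End Main.
Unset Implicit Arguments.

Section Ar.
Variable R : realType.

(* A = p N r2^2 ; B = p * sum *)
Lemma arith1 (t A B : R) : 0 < A -> 0 <= B -> B <= A ->
  - ((t / (8 * A)) * (t / 2)) + 2 * (t / (8 * A)) ^+ 2 * B <= - (t ^+ 2 / (48 * A)).
Proof.
move=> hA hB hBA.
have hq : 0 <= t ^+ 2 / A by rewrite divr_ge0 ?sqr_ge0 // ltW.
have hba : B / A <= 1 by rewrite ler_pdivrMr // mul1r.
have e1 : - ((t / (8 * A)) * (t / 2)) + 2 * (t / (8 * A)) ^+ 2 * B
   = t ^+ 2 / A * (- (1/16) + (B / A) / 32) by field; rewrite gt_eqF.
have e2 : - (t ^+ 2 / (48 * A)) = t ^+ 2 / A * (- (1/48)) by field; rewrite gt_eqF.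
rewrite e1 e2 ler_wpM2l //; lra.
Qed.

Lemma arith2 (t A2 r2 al B : R) : 0 < A2 -> 0 < r2 -> 0 <= t -> t <= A2 ->
  0 <= al -> al ^+ 2 = A2 * t / (4 * r2) -> 0 <= B -> B <= A2 ->
  - ((al / (4 * A2)) * al) + 2 * (al / (4 * A2)) ^+ 2 * B <= - (t ^+ 2 / (48 * A2 * r2)).
Proof.
move=> hA hr ht htA hal hal2 hB hBA.
have hba : B / A2 <= 1 by rewrite ler_pdivrMr // mul1r.
have e1 : - ((al / (4 * A2)) * al) + 2 * (al / (4 * A2)) ^+ 2 * B
   = al ^+ 2 / A2 * (- (1/4) + (B / A2) / 8) by field; rewrite gt_eqF.
have hq : 0 <= al ^+ 2 / A2 by rewrite divr_ge0 ?sqr_ge0 // ltW.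
rewrite e1.
apply: le_trans (_ : al ^+ 2 / A2 * (- (1/8)) <= _).
  by rewrite ler_wpM2l //; lra.
rewrite hal2.
have e2 : A2 * t / (4 * r2) / A2 * - (1 / 8) = - (t / r2) / 32 by field; rewrite !gt_eqF.
have e3 : - (t ^+ 2 / (48 * A2 * r2)) = - (t / r2) * (t / A2) / 48 by field; rewrite !gt_eqF.
rewrite e2 e3.
have h1 : 0 <= t / r2 by rewrite divr_ge0 // ltW.
have h2 : t / A2 <= 1 by rewrite ler_pdivrMr // mul1r.
have h3 : 0 <= t / A2 by rewrite divr_ge0 // ltW.
nra.
Qed.

Lemma arith3 (t A r2 : R) : 0 < A -> 0 < r2 -> 0 <= t -> t <= A * r2 ->
  - ((1/8) * (A / 2)) + 2 * (1/8) ^+ 2 * A <= - (t ^+ 2 / (48 * A * r2 ^+ 2)).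
Proof.
move=> hA hr ht htA.
have e2 : - (t ^+ 2 / (48 * A * r2 ^+ 2)) = - A * ((t / (A * r2)) ^+ 2) / 48.
  by field; rewrite !gt_eqF.
rewrite e2.
have h2 : t / (A * r2) <= 1 by rewrite ler_pdivrMr ?mulr_gt0 // mul1r.
have h3 : 0 <= t / (A * r2) by rewrite divr_ge0 // ltW // mulr_gt0.
have h4 : (t / (A * r2)) ^+ 2 <= 1 by rewrite expr2; nra.
nra.
Qed.
End Ar.

Lemma union_bound (R : realType) (n : nat) (p : R) (E E1 E2 E3 : pred {set 'I_n}) :
  0 <= p -> p <= 1 ->
  (forall W, E W -> [|| E1 W, E2 W | E3 W]) ->
  bernoulli_prob p E <= bernoulli_prob p E1 + bernoulli_prob p E2 + bernoulli_prob p E3.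
Proof.
move=> hp0 hp1 h; rewrite !bp_Ex /Ex -!big_split /=; apply: ler_sum => W _.
rewrite -!mulrDr; apply: ler_wpM2l; first exact: wt_ge0.
move: (h W); case: (E W); case: (E1 W); case: (E2 W); case: (E3 W) => /= hh;
  rewrite ?mulr1n ?mulr0n ?addr0 ?add0r //; try lra.
Qed.

Lemma nrm_one (R : realType) : nrm (1 : 'M[R]_1) = 1.
Proof. by rewrite /nrm /n2 /ipm !big_ord1 mxE mulr1 sqrtr1. Qed.

Lemma E3val (R : realType) (n : nat) (p : R) (Rs W : {set 'I_n}) :
  nrm (Ssum R n p 1 1 Rs (fun _ => 1) W) = `|(mm Rs W)%:R - p * #|Rs|%:R|.
Proof.
rewrite /nrm /n2 /ipm !big_ord1 -expr2 sqrtr_sqr; congr `|_|.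
rewrite /Ssum summxE.
under eq_bigr do rewrite mxE mxE mulr1.
rewrite sumrB sumr_const; congr (_ - _); last by rewrite mulr_natr.
rewrite (eq_bigr (fun i => if i \in W then 1 else 0)); last by move=> i _; case: (i \in W).
rewrite -big_mkcondr sumr_const /mm.
have -> : #|[pred i in Rs | i \in W]| = #|Rs :&: W| by apply: eq_card => i; rewrite !inE.
reflexivity.
Qed.

Theorem lemma13 (R : realType) (d n : nat) (x : 'I_n -> 'cV[R]_d)
  (Gamma : {set {set 'I_n}}) (Rs : {set 'I_n}) (p t : R) :
  partition Gamma [set: 'I_n] ->
  Rs \in Gamma ->
  0 < p -> p <= 1 ->
  0 <= t -> t <= p * #|Rs|%:R * cluster_radius x Gamma ^+ 2 ->
  bernoulli_prob p (fun W : {set 'I_n} =>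
      t <= `| op_norm22 (Xmat x (Rs :&: W)) ^+ 2 - p * op_norm22 (Xmat x Rs) ^+ 2 |)
  <= (3 * d.+1)%:R * expR (- (t ^+ 2 / (48%:R * p * #|Rs|%:R * cluster_radius x Gamma ^+ 4))).
Proof.
move=> _ hRG hp hp1 ht htr.
have hp0 : 0 <= p := ltW hp.
case: (eqVneq t 0) => [t0 | tn0].
  subst t.
  rewrite expr0n /= mul0r oppr0 expR0 mulr1.
  apply: (@le_trans _ _ 1).
    rewrite bp_Ex -[leRHS](Ex1 R n p); apply: Ex_le => // W.
    by rewrite normr_ge0.
  by rewrite ler1n muln_gt0.
have htp : 0 < t by rewrite lt_def tn0 ht.
set r := cluster_radius x Gamma in htr *.
set N := #|Rs|%:R in htr *.
have hN0 : 0 <= N := ler0n _ _.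
have hr20 : 0 <= r ^+ 2 := sqr_ge0 r.
have hA2 : 0 < p * N * r ^+ 2 by apply: lt_le_trans htr.
have hNr : 0 < N * r ^+ 2 by rewrite -(pmulr_rgt0 _ hp) mulrA.
have hN : 0 < N by nra.
have hr2 : 0 < r ^+ 2 by nra.
have hd : (0 < d)%N.
  case: (posnP d) => // d0; exfalso.
  have : r = 0.
    rewrite /r /cluster_radius; apply: (big_ind (fun v : R => v = 0)) => //.
      by move=> a b -> ->; rewrite maxxx.
    move=> S _; apply: (big_ind (fun v : R => v = 0)) => //.
      by move=> a b -> ->; rewrite maxxx.
    move=> i _.
    rewrite /eucl_norm (_ : \sum_(a < d) _ = 0) ?sqrtr0 //; apply: big1 => a _.
    by have := ltn_ord a; rewrite [X in (_ < X)%N]d0.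
  by move=> r0; move: hr2; rewrite r0 expr0n ltxx.
have hY : forall i, i \in Rs -> nrm (Y x Rs i) <= r.
  move=> i hi; rewrite /Y -eucl_nrm /r /cluster_radius.
  apply: le_trans (_ : _ <= \big[Num.max/0]_(i in Rs) eucl_norm (x i - centroid x Rs)) _.
    exact: (le_bigmax_cond _ _ hi).
  exact: (le_bigmax_cond _ _ hRG).
have hY2 : forall i, i \in Rs -> n2 (Y x Rs i) <= r ^+ 2.
  move=> i hi; rewrite -nrm_sq; have h0 := nrm_ge0 (Y x Rs i); have h1 := hY i hi.
  by rewrite !expr2 ler_pM.
set T := t ^+ 2 / (48%:R * p * N * r ^+ 4).
set al2 := Num.sqrt (p * N * t / 4).
have hal2 : 0 <= al2 := sqrtr_ge0 _.
have hal2sq : al2 ^+ 2 = p * N * t / 4 by rewrite sqr_sqrtr // divr_ge0 // mulr_ge0 // mulr_ge0.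
set E1 := fun W : {set 'I_n} => t / 2 <= nrm (GG x Rs p W).
set E2 := fun W : {set 'I_n} => al2 <= nrm (SS x Rs p W).
set E3 := fun W : {set 'I_n} => p * N / 2 <= nrm (Ssum R n p 1 1 Rs (fun _ => 1) W).
have incl : forall W, t <= `| op_norm22 (Xmat x (Rs :&: W)) ^+ 2 - p * op_norm22 (Xmat x Rs) ^+ 2 | ->
    [|| E1 W, E2 W | E3 W].
  move=> W hW.
  have hk := le_trans hW (key x Rs W hp).
  rewrite /E1 /E2 /E3.
  case: (lerP (t / 2) (nrm (GG x Rs p W))) => h1 //=.
  have he : t / 2 < n2 (SS x Rs p W) / (mm Rs W)%:R by lra.
  have hm : (0 < mm Rs W)%N.
    case: (posnP (mm Rs W)) => // m0; move: he; rewrite m0 invr0 mulr0; lra.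
  have hm' : 0 < (mm Rs W)%:R :> R by rewrite ltr0n.
  case: (lerP ((mm Rs W)%:R) (p * N / 2)) => h3.
    apply/orP; right; rewrite E3val -/N.
    rewrite ler_normr; apply/orP; right; lra.
  apply/orP; left.
  rewrite /al2 /nrm ler_sqrt ?n2_ge0 //.
  move: he; rewrite ltr_pdivlMr // => he.
  have : t / 2 * (p * N / 2) <= t / 2 * (mm Rs W)%:R by apply: ler_wpM2l; [rewrite divr_ge0 // ltW | exact: ltW].
  have -> : t / 2 * (p * N / 2) = p * N * t / 4 by field.
  lra.
apply: le_trans; first exact: (@union_bound R n p _ E1 E2 E3 hp0 hp1 incl).
have e4 : r ^+ 4 = (r ^+ 2) ^+ 2 by rewrite -exprM.
have hr4 : 0 < r ^+ 4 by rewrite e4 exprn_gt0.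
have hden : 0 < 48%:R * p * N * r ^+ 4.
  by apply: mulr_gt0 => //; apply: mulr_gt0 => //; apply: mulr_gt0 => //; rewrite ltr0n.
have hT : 0 <= T by rewrite /T divr_ge0 ?sqr_ge0 // ltW.
have rn0 : r != 0 by apply: contraTneq hr2 => ->; rewrite expr0n ltxx.
have hNn0 : N != 0 by rewrite gt_eqF.
have hpn0 : p != 0 by rewrite gt_eqF.
have htA : t / (p * N * r ^+ 2) <= 1 by rewrite ler_pdivrMr // mul1r.
pose A := p * N * r ^+ 4.
have hA : 0 < A by apply: mulr_gt0 => //; apply: mulr_gt0.
have B1 : bernoulli_prob p E1 <= 2 * expR (- T).
  pose l1 := t / (8 * A).
  have hl1 : 0 <= l1 by rewrite /l1 divr_ge0 ?ltW // mulr_gt0.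
  have cond : forall i, i \in Rs -> l1 * nrm (Y x Rs i *m (Y x Rs i)^T) <= 1/2.
    move=> i hi; rewrite n2_outer.
    apply: le_trans (_ : l1 * r ^+ 2 <= _); first by rewrite ler_wpM2l // hY2.
    have -> : l1 * r ^+ 2 = t / (p * N * r ^+ 2) / 8 by rewrite /l1 /A; field; rewrite rn0 hNn0 hpn0.
    lra.
  have ht2 : 0 <= t / 2 by rewrite divr_ge0.
  have P1 := @pin_tail R n p hp0 hp1 d d (fun i => Y x Rs i *m (Y x Rs i)^T) Rs l1 (t / 2) hl1 ht2 cond.
  apply: le_trans P1 _.
  rewrite ler_wpM2l // ler_expR.
  set S1 := \sum_(i in Rs) _.
  have hS1 : S1 <= N * r ^+ 4.
    apply: le_trans (_ : S1 <= \sum_(i in Rs) r ^+ 4) _.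
      apply: ler_sum => i hi; rewrite -nrm_sq n2_outer e4.
      have h0 := n2_ge0 (Y x Rs i).
      by rewrite !expr2 ler_pM // -expr2 hY2.
    by rewrite sumr_const -mulr_natl.
  have hS0 : 0 <= S1 by apply: sumr_ge0 => i _; apply: n2_ge0.
  have -> : 2 * l1 ^+ 2 * p * S1 = 2 * l1 ^+ 2 * (p * S1) by ring.
  have -> : T = t ^+ 2 / (48 * A) by rewrite /T /A !mulrA.
  apply: arith1 => //; first by rewrite mulr_ge0.
  by rewrite /A -mulrA ler_wpM2l.
have B2 : bernoulli_prob p E2 <= 2 * expR (- T).
  pose A2 := p * N * r ^+ 2.
  have hA2' : 0 < A2 by [].
  pose l2 := al2 / (4 * A2).
  have hl2 : 0 <= l2 by rewrite /l2 divr_ge0 // ltW // mulr_gt0.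
  have cond : forall i, i \in Rs -> l2 * nrm (Y x Rs i) <= 1/2.
    move=> i hi.
    have h0 : 0 <= l2 * nrm (Y x Rs i) by rewrite mulr_ge0 ?nrm_ge0.
    have hsq : (l2 * nrm (Y x Rs i)) ^+ 2 <= 1/4.
      rewrite exprMn nrm_sq.
      apply: le_trans (_ : l2 ^+ 2 * r ^+ 2 <= _); first by rewrite ler_wpM2l ?sqr_ge0 // hY2.
      have -> : l2 ^+ 2 * r ^+ 2 = al2 ^+ 2 / (16 * A2 ^+ 2) * r ^+ 2 by rewrite /l2; field; rewrite gt_eqF.
      rewrite hal2sq.
      have -> : p * N * t / 4 / (16 * A2 ^+ 2) * r ^+ 2 = t / (p * N * r ^+ 2) / 64.
        by rewrite /A2; field; rewrite rn0 hNn0 hpn0.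
      lra.
    have : (l2 * nrm (Y x Rs i)) ^+ 2 <= (1/2) ^+ 2 by lra.
    by rewrite ler_pXn2r // ?nnegrE //; lra.
  have P2 := @pin_tail R n p hp0 hp1 d 1 (Y x Rs) Rs l2 al2 hl2 hal2 cond.
  apply: le_trans P2 _.
  rewrite ler_wpM2l // ler_expR.
  set S2 := \sum_(i in Rs) _.
  have hS2 : S2 <= N * r ^+ 2.
    apply: le_trans (_ : S2 <= \sum_(i in Rs) r ^+ 2) _.
      by apply: ler_sum => i hi; apply: hY2.
    by rewrite sumr_const -mulr_natl.
  have hS0 : 0 <= S2 by apply: sumr_ge0 => i _; apply: n2_ge0.
  have -> : 2 * l2 ^+ 2 * p * S2 = 2 * l2 ^+ 2 * (p * S2) by ring.
  have -> : T = t ^+ 2 / (48 * A2 * r ^+ 2) by rewrite /T /A2 e4; congr (_ / _); ring.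
  apply: (@arith2 R t A2 (r ^+ 2) al2 (p * S2) hA2' hr2 ht htr hal2 _ _ _).
  - by rewrite hal2sq /A2; field; rewrite rn0.
  - by rewrite mulr_ge0.
  - by rewrite /A2 -mulrA ler_wpM2l.
have B3 : bernoulli_prob p E3 <= 2 * expR (- T).
  have hl3 : 0 <= (1/8 : R) by [].
  have hal3 : 0 <= p * N / 2 by rewrite divr_ge0 // mulr_ge0.
  have cond : forall i, i \in Rs -> 1/8 * nrm ((fun _ => 1 : 'M[R]_1) i) <= 1/2.
    by move=> i _; rewrite nrm_one; lra.
  have P3 := @pin_tail R n p hp0 hp1 1 1 (fun _ => 1) Rs (1/8) (p * N / 2) hl3 hal3 cond.
  apply: le_trans P3 _.
  rewrite ler_wpM2l // ler_expR.
  have -> : \sum_(i in Rs) n2 ((fun _ => 1 : 'M[R]_1) i) = N.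
    rewrite (eq_bigr (fun _ => 1)); last by move=> i _; rewrite /n2 /ipm !big_ord1 mxE mulr1.
    by rewrite sumr_const.
  have -> : 2 * (1/8) ^+ 2 * p * N = 2 * (1/8) ^+ 2 * (p * N) by ring.
  have -> : T = t ^+ 2 / (48 * (p * N) * (r ^+ 2) ^+ 2) by rewrite /T -e4 !mulrA.
  apply: (@arith3 R t (p * N) (r ^+ 2) _ hr2 ht _); first by rewrite mulr_gt0.
  exact: htr.
have h6 : 6 <= (3 * d.+1)%:R :> R by rewrite ler_nat (_ : 6 = 3 * 2)%N // leq_mul2l /= ltnS.
have hE := expR_gt0 (- T).
apply: le_trans (lerD (lerD B1 B2) B3) _.
have : 6 * expR (- T) <= (3 * d.+1)%:R * expR (- T) by rewrite ler_wpM2r // ltW.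
lra.
Qed.
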